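(* Let $\Gamma$ be a metric graph or a tropical curve with a real structure $\iota$, let $D_1,D_2$ be real divisors on $\Gamma$, and let $f$ be a rational function on $\Gamma$ with $\Delta(f)=D_2-D_1$. Then $\overline f=f$, where $\overline f(p)=f(\iota(p))$.
   Context: A metric graph is a compact connected metric space locally isometric to star-shaped sets $\{te^{2k\pi i/n}:0\le t<r\}\subset\mathbb C$; vertices are points of local valence $\ne2$, edges are the components of the complement of the vertices. A tropical curve is the union of a metric graph and finitely many unbounded edges isometric to $[0,\infty]$, each attached at its point $0$. A real structure is an isometric involution $\iota$; $\overline p=\iota(p)$. A divisor is a finite formal $\mathbb Z$-combination of points; $\overline D(p)=D(\overline p)$, and $D$ is real if $\overline D=D$. A rational function is a continuous $f:\Gamma\to\mathbb R$, piecewise affine with integer slopes and finitely many pieces on each edge; $\Delta(f)(p)$ is the sum of the outgoing slopes of $f$ at $p$ and $\Delta(f)=\sum_p\Delta(f)(p)p$. *)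

(* Defs.v *)
From HB Require Import structures.
From mathcomp Require Import all_boot all_order all_algebra.
From mathcomp Require Import reals.
From Stdlib Require List.
Set Implicit Arguments. Unset Strict Implicit. Unset Printing Implicit Defensive.
Import Order.TTheory GRing.Theory Num.Theory.
Local Open Scope ring_scope.

(* A tropical curve (or metric graph, when there are no points at infinity),
   given through a combinatorial model: a finite connected multigraph (loops
   and multiple edges allowed, vertices of valence 2 allowed) with edge
   lengths.  An edge e of finite length L is isometric to [0,L], glued at
   0 to [src e] and at L to [tgt e].  An edge of infinite length ([len e =
   None]) is an unbounded edge [0,oo], glued at 0 to [src e]; its point at
   infinity is the vertex [tgt e], which is flagged by [inf]. *)
Record tcurve (R : realType) := TCurve {
  V : finType;
  E : finType;
  src : E -> V;
  tgt : E -> V;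
  len : E -> option R;
  inf : V -> bool;
  len_pos : forall e r, len e = Some r -> 0 < r;
  inf_edge : forall e, len e = None -> inf (tgt e);
  inf_no_src : forall v e, inf v -> src e != v;
  inf_unique_edge : forall v, inf v ->
     exists e, [/\ tgt e = v, len e = None & forall e', tgt e' = v -> e' = e];
  connected : forall S : {set V}, (exists v, v \in S) ->
     (forall e, (src e \in S) = (tgt e \in S)) -> S = setT
}.

(* raw points: a vertex, or the point at distance t from src e on edge e *)
Inductive rpoint (R : realType) (G : tcurve R) :=
  | PV of V G
  | PE of E G & R.
Arguments PV {R G}. Arguments PE {R G}.

Definition in_edge (R : realType) (G : tcurve R) (e : E G) (t : R) : bool :=
  (0 < t) && (if len e is Some L then t < L else true).

Definition valid (R : realType) (G : tcurve R) (p : rpoint G) : bool :=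
  match p with PV _ => true | PE e t => in_edge e t end.

Definition edge_fun (R : realType) (G : tcurve R) (f : rpoint G -> R) (e : E G)
  (t : R) : R :=
  if t == 0 then f (PV (src e))
  else if (if len e is Some L then t == L else false) then f (PV (tgt e))
  else f (PE e t).

Definition pw_affine (R : realType) (g : R -> R) (b : seq R) : Prop :=
  [/\ b`_0 = 0, (0 < size b)%N, sorted <%R b &
   forall i, (i.+1 < size b)%N -> exists m : int,
     forall t, b`_i <= t <= b`_i.+1 -> g t = g b`_i + m%:~R * (t - b`_i)].

(* rational function: continuous, piecewise affine with integer slopes,
   finitely many pieces on each edge *)
Definition rational_fun (R : realType) (G : tcurve R) (f : rpoint G -> R) : Prop :=
  forall e, exists b : seq R, pw_affine (edge_fun f e) b /\
    match len e with
    | Some L => last 0 b = L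
    | None => (exists m : int, forall t, last 0 b <= t ->
                 edge_fun f e t = edge_fun f e (last 0 b) + m%:~R * (t - last 0 b))
              /\
              (forall eps : R, 0 < eps -> exists M : R, forall t, M < t ->
                 `|edge_fun f e t - f (PV (tgt e))| < eps)
    end.

(* outgoing slope s of g at t in the increasing / decreasing direction *)
Definition fwd_slope (R : realType) (g : R -> R) (t : R) (s : int) : Prop :=
  exists2 eps : R, 0 < eps & forall h, 0 < h < eps -> g (t + h) = g t + s%:~R * h.
Definition bwd_slope (R : realType) (g : R -> R) (t : R) (s : int) : Prop :=
  exists2 eps : R, 0 < eps & forall h, 0 < h < eps -> g (t - h) = g t + s%:~R * h.

(* outgoing slope at the tgt-end of edge e; at a point at infinity the
   (continuous, real valued) function is locally constant, slope 0 *)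
Definition end_slope (R : realType) (G : tcurve R) (f : rpoint G -> R) (e : E G)
  (s : int) : Prop :=
  match len e with
  | Some L => bwd_slope (edge_fun f e) L s
  | None => s = 0 /\ exists M : R, forall t, M < t -> edge_fun f e t = f (PV (tgt e))
  end.

(* Delta(f) = D : D(p) is the sum of the outgoing slopes of f at p *)
Definition laplacian_eq (R : realType) (G : tcurve R) (f : rpoint G -> R)
  (D : rpoint G -> int) : Prop :=
  forall p, valid p ->
  match p with
  | PE e t => exists s1 s2 : int,
      [/\ fwd_slope (edge_fun f e) t s1, bwd_slope (edge_fun f e) t s2 &
          D p = s1 + s2]
  | PV v => exists s : E G -> int * int,
      (forall e, src e = v -> fwd_slope (edge_fun f e) 0 (s e).1) /\
      (forall e, tgt e = v -> end_slope f e (s e).2) /\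
      D p = \sum_(e : E G) ((src e == v)%:R * (s e).1 + (tgt e == v)%:R * (s e).2)
  end.

Definition divisor (R : realType) (G : tcurve R) (D : rpoint G -> int) : Prop :=
  exists l : list (rpoint G), forall p, valid p -> D p != 0 -> List.In p l.

(* A real structure, i.e. an isometric involution, given combinatorially as
   an involutive length-preserving automorphism of the model (possibly
   reversing edges). *)
Record real_str (R : realType) (G : tcurve R) := RealStr {
  sV : V G -> V G;
  sE : E G -> E G;
  flip : E G -> bool;
  sV_inv : forall v, sV (sV v) = v;
  sE_inv : forall e, sE (sE e) = e;
  flip_sE : forall e, flip (sE e) = flip e;
  len_sE : forall e, len (sE e) = len e;
  inf_sV : forall v, inf (sV v) = inf v;
  flip_fin : forall e, flip e -> len e <> None;
  ends_sE : forall e, if flip e then src (sE e) = sV (tgt e) /\ tgt (sE e) = sV (src e)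
                      else src (sE e) = sV (src e) /\ tgt (sE e) = sV (tgt e)
}.

Definition rs_map (R : realType) (G : tcurve R) (s : real_str G) (p : rpoint G) : rpoint G :=
  match p with
  | PV v => PV (sV s v)
  | PE e t => PE (sE s e)
      (if flip s e then (if len e is Some L then L - t else t) else t)
  end.

Definition real_div (R : realType) (G : tcurve R) (s : real_str G) (D : rpoint G -> int) : Prop :=
  forall p, valid p -> D (rs_map s p) = D p.

(* Main.v *)
Require Import Defs.
From mathcomp Require Import all_boot all_order all_algebra reals.
From mathcomp Require classical_sets.
From mathcomp Require Import ring lra zify.
Import Order.TTheory GRing.Theory Num.Theory.
Set Implicit Arguments. Unset Strict Implicit.
Local Open Scope ring_scope.

Section S0.
Variable R : realType.
Implicit Types h k : R -> R.

Lemma min_pos (e1 e2 : R) : 0 < e1 -> 0 < e2 ->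
  exists m : R, [/\ 0 < m, m <= e1 & m <= e2].
Proof.
move=> h1 h2; exists (Num.min e1 e2); split; rewrite ?ge_min ?lexx ?orbT //.
by rewrite lt_min h1.
Qed.

Lemma intr_inj' (a b : int) : a%:~R = b%:~R :> R -> a = b.
Proof. by move/eqP; rewrite eqr_int => /eqP. Qed.

Lemma slope_eq (a b : int) (x y c1 c2 : R) : x != y ->
  c1 + a%:~R * x = c2 + b%:~R * x -> c1 + a%:~R * y = c2 + b%:~R * y -> a = b /\ c1 = c2.
Proof.
move=> xy E1 E2.
have: (a%:~R - b%:~R) * (x - y) = 0 :> R.
  have -> : (a%:~R - b%:~R) * (x - y) = ((c1 + a%:~R * x) - (c2 + b%:~R * x))
     - ((c1 + a%:~R * y) - (c2 + b%:~R * y)) :> R by ring.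
  by rewrite E1 E2; ring.
have xy' : (x - y) != 0 by rewrite subr_eq0.
move/eqP; rewrite mulf_eq0 (negbTE xy') orbF subr_eq0.
move=> /eqP ab; have abi := intr_inj' ab; split => //.
by subst b; move: E1; apply: addIr.
Qed.

Lemma fwd_uniq h t a b : fwd_slope h t a -> fwd_slope h t b -> a = b.
Proof.
move=> [e1 e1p H1] [e2 e2p H2].
have [m [mp m1 m2]] := min_pos e1p e2p.
have [] := @slope_eq a b (m/2) (m/4) (h t) (h t).
- lra.
- by rewrite -H1 ?H2 //; apply/andP; split; lra.
- by rewrite -H1 ?H2 //; apply/andP; split; lra.
done.
Qed.

Lemma bwd_uniq h t a b : bwd_slope h t a -> bwd_slope h t b -> a = b.
Proof.
move=> [e1 e1p H1] [e2 e2p H2].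
have [m [mp m1 m2]] := min_pos e1p e2p.
have [] := @slope_eq a b (m/2) (m/4) (h t) (h t).
- lra.
- by rewrite -H1 ?H2 //; apply/andP; split; lra.
- by rewrite -H1 ?H2 //; apply/andP; split; lra.
done.
Qed.

Lemma fwd_sub h k t a b : fwd_slope h t a -> fwd_slope k t b ->
  fwd_slope (fun x => h x - k x) t (a - b).
Proof.
move=> [e1 e1p H1] [e2 e2p H2].
have [m [mp m1 m2]] := min_pos e1p e2p.
exists m => // x /andP[x0 xm].
rewrite H1 ?H2 ?x0 /=; rewrite ?intrB; first [lra | ring].
Qed.

Lemma bwd_sub h k t a b : bwd_slope h t a -> bwd_slope k t b ->
  bwd_slope (fun x => h x - k x) t (a - b).
Proof.
move=> [e1 e1p H1] [e2 e2p H2].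
have [m [mp m1 m2]] := min_pos e1p e2p.
exists m => // x /andP[x0 xm].
rewrite H1 ?H2 ?x0 /=; rewrite ?intrB; first [lra | ring].
Qed.

Lemma fwd_ext h k t a : (forall x, h x = k x) -> fwd_slope k t a -> fwd_slope h t a.
Proof. by move=> E [e ep H]; exists e => // x xe; rewrite !E H. Qed.

Lemma bwd_ext h k t a : (forall x, h x = k x) -> bwd_slope k t a -> bwd_slope h t a.
Proof. by move=> E [e ep H]; exists e => // x xe; rewrite !E H. Qed.

Lemma fwd_refl h k L t a : (forall x, h x = k (L - x)) -> bwd_slope k (L - t) a ->
  fwd_slope h t a.
Proof.
move=> E [e ep H]; exists e => // x xe; rewrite !E -H //.
by congr k; ring.
Qed.

Lemma bwd_refl h k L t a : (forall x, h x = k (L - x)) -> fwd_slope k (L - t) a ->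
  bwd_slope h t a.
Proof.
move=> E [e ep H]; exists e => // x xe; rewrite !E -H //.
by congr k; ring.
Qed.

End S0.

Section S1.
Variable R : realType.
Implicit Types h k : R -> R.

Lemma affine_loc h (L : R) (a : int) : 0 < L -> fwd_slope h 0 a ->
 (forall t, 0 < t < L -> exists s, fwd_slope h t s /\ bwd_slope h t (-s)) ->
 (exists s, bwd_slope h L s) ->
 forall t, 0 <= t <= L -> h t = h 0 + a%:~R * t.
Proof.
move=> L0 Ha Hint HL.
pose A := (fun t => (0 <= t <= L) /\ forall u, 0 <= u <= t -> h u = h 0 + a%:~R * u).
have A0 : A 0.
  split; first by rewrite lexx ltW.
  move=> u /andP[u0 u1]; have -> : u = 0 by apply/le_anti; rewrite u0 u1.
  by rewrite mulr0 addr0.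
have hs : classical_sets.has_sup A.
  split; first by exists 0.
  by exists L => x [/andP[_ ?] _].
pose T := sup A.
have T0 : 0 <= T := sup_upper_bound hs A0.
have TL : T <= L.
  rewrite leNgt; apply/negP => LT.
  have e0 : 0 < T - L by rewrite subr_gt0.
  have [x [/andP[_ xL] _]] := sup_adherent e0 hs.
  rewrite /T; lra.
have C1 : forall u, 0 <= u < T -> h u = h 0 + a%:~R * u.
  move=> u /andP[u0 uT].
  have e0 : 0 < T - u by rewrite subr_gt0.
  have [x [_ Hx] ux] := sup_adherent e0 hs.
  apply: Hx; rewrite u0 /=; rewrite /T in ux; lra.
have C2 : 0 < T -> forall b, bwd_slope h T b -> h T = h 0 + a%:~R * T /\ b = -a.
  move=> Tp b [e ep H].
  have [m [mp m1 m2]] := min_pos ep Tp.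
  suff [ba ->] : b = -a /\ h T = h 0 + a%:~R * T by [].
  apply: (@slope_eq _ b (-a) (m/2) (m/4)).
  - lra.
  - rewrite -H; last by apply/andP; split; lra.
    rewrite C1; last by apply/andP; split; lra.
    rewrite intrN; ring.
  - rewrite -H; last by apply/andP; split; lra.
    rewrite C1; last by apply/andP; split; lra.
    rewrite intrN; ring.
have C2' : h T = h 0 + a%:~R * T.
  have [T00|Tp] := eqVneq T 0.
    by rewrite T00 mulr0 addr0.
  have Tp' : 0 < T by rewrite lt_neqAle eq_sym Tp T0.
  have [TeL|TneL] := eqVneq T L.
    by case: HL => b; rewrite -TeL => /(C2 Tp') [].
  have [s [_ Hb]] : exists s, fwd_slope h T s /\ bwd_slope h T (-s).
    by apply: Hint; rewrite Tp' /= lt_neqAle TneL TL.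
  by case: (C2 Tp' _ Hb).
have C3 : T = L.
  apply/eqP; rewrite eq_le TL /= leNgt; apply/negP => TL'.
  have [e ep H] : fwd_slope h T a.
    have [T00|Tp] := eqVneq T 0; first by rewrite T00.
    have Tp' : 0 < T by rewrite lt_neqAle eq_sym Tp T0.
    have [s [Hf Hb]] : exists s, fwd_slope h T s /\ bwd_slope h T (-s).
      by apply: Hint; rewrite Tp' TL'.
    have [_ sa] := C2 Tp' _ Hb.
    by have -> : a = s by rewrite -(opprK a) -sa opprK.
  have e0 : 0 < L - T by rewrite subr_gt0.
  have [m [mp m1 m2]] := min_pos ep e0.
  have AT' : A (T + m / 2).
    split; first by apply/andP; split; lra.
    move=> u /andP[u0 uT'].
    have [uT|Tu] := ltP u T; first by apply: C1; rewrite u0 uT.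
    have [uTe|uTn] := eqVneq u T; first by rewrite uTe.
    have Tu' : T < u by rewrite lt_neqAle eq_sym uTn Tu.
    have -> : u = T + (u - T) by ring.
    rewrite H; last by apply/andP; split; lra.
    rewrite C2'; ring.
  have := sup_upper_bound hs AT'; rewrite -/T; lra.
move=> t /andP[t0 tL].
have [tT|Tt] := ltP t T; first by apply: C1; rewrite t0 tT.
have -> : t = T by apply/le_anti; rewrite Tt C3 tL.
exact: C2'.
Qed.
End S1.

Section S2.
Variable R : realType.
Variable G : tcurve R.
Variable s : real_str G.
Variable f : rpoint G -> R.

Definition Fi p := f (rs_map s p).
Definition gg p := Fi p - f p.
Definition phi (e : E G) (t : R) := if flip s e then (if len e is Some L then L - t else t) else t.

Lemma len_ne0 (e : E G) L : len e = Some L -> L != 0.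
Proof. by move=> /len_pos H; rewrite gt_eqF. Qed.

Lemma edge_Fi (e : E G) t : edge_fun Fi e t = edge_fun f (sE s e) (phi e t).
Proof.
rewrite /edge_fun /phi /Fi /= len_sE.
have := ends_sE s e; have := @flip_fin _ _ s e.
case Hf : (flip s e) => /= Hfin [Hs Ht]; rewrite Hs Ht;
  case Hl : (len e) => [L|] //=.
- have L0 := len_ne0 Hl.
  have [->|t0] := eqVneq t 0; first by rewrite subr0 eqxx (negbTE L0).
  have [->|tL] := eqVneq t L; first by rewrite subrr eqxx.
  have -> : (L - t == 0) = false by rewrite subr_eq0 eq_sym (negbTE tL).
  have -> : (L - t == L) = false.
    by rewrite -{2}(subr0 L) (inj_eq (addrI L)) eqr_opp (negbTE t0).
  done.
- by case: Hfin.
Qed.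

Lemma edge_g (e : E G) t : edge_fun gg e t = edge_fun Fi e t - edge_fun f e t.
Proof. by rewrite /edge_fun; case: (t == 0) => //; case: (len e) => // L; case: (t == L). Qed.

Lemma rs_inv (p : rpoint G) : rs_map s (rs_map s p) = p.
Proof.
case: p => [v|e t] /=; first by rewrite sV_inv.
rewrite sE_inv flip_sE len_sE; case: (flip s e) => //.
by case: (len e) => // L; rewrite opprB addrC subrK.
Qed.

Lemma rs_valid (p : rpoint G) : valid p -> valid (rs_map s p).
Proof.
case: p => [v|e t] //=; rewrite /in_edge len_sE.
case: (flip s e) => //; case: (len e) => // L /andP[t0 tL].
apply/andP; split; lra.
Qed.

End S2.

Section S3.
Variable R : realType.
Variable G : tcurve R.
Variable s : real_str G.
Variable f : rpoint G -> R.
Variable D : rpoint G -> int.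
Hypothesis HD : real_div s D.
Hypothesis HL : laplacian_eq f D.

Lemma Fi_nf (e : E G) : flip s e = false ->
  forall t, edge_fun (Fi s f) e t = edge_fun f (sE s e) t.
Proof. by move=> Hf t; rewrite edge_Fi /phi Hf. Qed.

Lemma Fi_fl (e : E G) L : flip s e = true -> len e = Some L ->
  forall t, edge_fun (Fi s f) e t = edge_fun f (sE s e) (L - t).
Proof. by move=> Hf Hl t; rewrite edge_Fi /phi Hf Hl. Qed.

Lemma interior (e : E G) t : valid (PE e t) ->
  exists a, fwd_slope (edge_fun (gg s f) e) t a /\ bwd_slope (edge_fun (gg s f) e) t (-a).
Proof.
move=> v.
have := HL v => /= -[s1 [s2 [F1 F2 D1]]].
have vi := rs_valid s v.
have := HL vi => /= -[s1' [s2' [F1' F2' D1']]].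
have HDv := HD v; rewrite /= in HDv.
have E : s1' + s2' = s1 + s2 by rewrite -D1' -D1 HDv.
move: F1' F2'.
case Hf : (flip s e) => F1' F2'.
- case Hl : (len e) => [L|]; last by case: (flip_fin Hf Hl).
  rewrite Hl in F1' F2'.
  exists (s2' - s1); split.
  + apply: (fwd_ext (edge_g s f e)); apply: fwd_sub => //.
    exact: (fwd_refl (Fi_fl Hf Hl)).
  + have -> : - (s2' - s1) = s1' - s2 by lia.
    apply: (bwd_ext (edge_g s f e)); apply: bwd_sub => //.
    exact: (bwd_refl (Fi_fl Hf Hl)).
- exists (s1' - s1); split.
  + apply: (fwd_ext (edge_g s f e)); apply: fwd_sub => //.
    exact: (fwd_ext (Fi_nf Hf)).
  + have -> : - (s1' - s1) = s2' - s2 by lia.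
    apply: (bwd_ext (edge_g s f e)); apply: bwd_sub => //.
    exact: (bwd_ext (Fi_nf Hf)).
Qed.

End S3.

Section S4.
Variable R : realType.
Variable G : tcurve R.
Variable s : real_str G.
Variable f : rpoint G -> R.
Variable D : rpoint G -> int.
Hypothesis HD : real_div s D.
Hypothesis HL : laplacian_eq f D.

Lemma end_sub (e : E G) a b : end_slope (Fi s f) e a -> end_slope f e b ->
  end_slope (gg s f) e (a - b).
Proof.
rewrite /end_slope; case: (len e) => [L|].
  by move=> H1 H2; apply: (bwd_ext (edge_g s f e)); apply: bwd_sub.
move=> [-> [M1 H1]] [-> [M2 H2]]; split => //.
exists (Num.max M1 M2) => t; rewrite gt_max => /andP[t1 t2].
by rewrite edge_g H1 // H2.
Qed.

Lemma vertex (v : V G) : exists sg : E G -> int * int,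
 [/\ forall e, src e = v -> fwd_slope (edge_fun (gg s f) e) 0 (sg e).1,
     forall e, tgt e = v -> end_slope (gg s f) e (sg e).2 &
     \sum_(e : E G) ((src e == v)%:R * (sg e).1 + (tgt e == v)%:R * (sg e).2) = 0].
Proof.
have := HL (p := PV v) isT => /= -[sv [Sv1 [Sv2 Dv]]].
have := HL (p := PV (sV s v)) isT => /= -[sw [Sw1 [Sw2 Dw]]].
pose sfi e := if flip s e then ((sw (sE s e)).2, (sw (sE s e)).1) else sw (sE s e).
exists (fun e => ((sfi e).1 - (sv e).1, (sfi e).2 - (sv e).2)); split.
- move=> e He /=.
  apply: (fwd_ext (edge_g s f e)); apply: fwd_sub; last exact: Sv1.
  rewrite /sfi; have := ends_sE s e; case Hf: (flip s e) => -[Hs Ht] /=.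
  + case Hl : (len e) => [L|]; last by case: (flip_fin Hf Hl).
    apply: (fwd_refl (Fi_fl f Hf Hl)); rewrite subr0.
    have H2 : tgt (sE s e) = sV s v by rewrite Ht He.
    have := Sw2 _ H2; rewrite /end_slope len_sE Hl; by apply.
  + apply: (fwd_ext (Fi_nf f Hf)); apply: Sw1; by rewrite Hs He.
- move=> e He /=; apply: end_sub; last exact: Sv2.
  rewrite /sfi /end_slope; have := ends_sE s e.
  case Hl: (len e) => [L|]; case Hf: (flip s e) => -[Hs Ht] /=.
  + apply: (bwd_refl (Fi_fl f Hf Hl)); rewrite subrr.
    by apply: Sw1; rewrite Hs He.
  + apply: (bwd_ext (Fi_nf f Hf)).
    have H2 : tgt (sE s e) = sV s v by rewrite Ht He.
    have := Sw2 _ H2; rewrite /end_slope len_sE Hl; by apply.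
  + by case: (flip_fin Hf Hl).
  + have H2 : tgt (sE s e) = sV s v by rewrite Ht He.
    have := Sw2 _ H2; rewrite /end_slope len_sE Hl.
    case=> // z0 [M HM]; split => //; exists M => t tM.
    by rewrite (Fi_nf f Hf) HM // Ht He.
- rewrite /= (_ : \sum_e _ = \sum_e ((src e == v)%:R * (sfi e).1 + (tgt e == v)%:R * (sfi e).2)
      - \sum_e ((src e == v)%:R * (sv e).1 + (tgt e == v)%:R * (sv e).2)); last first.
    by rewrite -sumrB; apply: eq_bigr => e _ /=; ring.
  rewrite -Dv.
  have -> : \sum_e ((src e == v)%:R * (sfi e).1 + (tgt e == v)%:R * (sfi e).2)
            = D (PV (sV s v)).
    rewrite Dw [RHS](reindex_inj (inv_inj (sE_inv s))); apply: eq_bigr => e _.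
    rewrite /sfi; have := ends_sE s e; case: (flip s e) => -[-> ->];
      rewrite !(inj_eq (inv_inj (sV_inv s))) /=; first [reflexivity | exact: addrC].
  by have := HD (p := PV v) isT; rewrite /= => ->; rewrite subrr.
Qed.

End S4.

Section S5.
Variable R : realType.
Variable G : tcurve R.
Variable s : real_str G.
Variable f : rpoint G -> R.
Variable D : rpoint G -> int.
Hypothesis HD : real_div s D.
Hypothesis HL : laplacian_eq f D.

Lemma g_const (p0 : rpoint G) : exists cm, forall p, valid p -> gg s f p = cm.
Proof.
have [SG HSG] := fin_all_exists (vertex HD HL).
pose a e := (SG (src e) e).1.
pose c v := gg s f (PV v).
have edge_aff : forall e (t : R), 0 <= t -> (forall L, len e = Some L -> t <= L) ->
    edge_fun (gg s f) e t = c (src e) + (a e)%:~R * t.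
  move=> e t t0 tL.
  have h0 : edge_fun (gg s f) e 0 = c (src e) by rewrite /edge_fun eqxx.
  have [F0 _ _] := HSG (src e).
  have Fa := F0 e erefl.
  rewrite -h0.
  case Hl : (len e) => [L|].
    have L0 := len_pos Hl.
    apply: (affine_loc L0 Fa); last by rewrite t0 tL.
    + move=> x /andP[x0 xL]; apply: (interior HD HL).
      by rewrite /= /in_edge Hl x0 xL.
    + have [_ F2 _] := HSG (tgt e).
      by have := F2 e erefl; rewrite /end_slope Hl => H; exists (SG (tgt e) e).2.
  have [->|tn0] := eqVneq t 0; first by rewrite mulr0 addr0.
  have tp : 0 < t by rewrite lt_neqAle eq_sym tn0 t0.
  apply: (affine_loc tp Fa); last by rewrite t0 lexx.
  + move=> x /andP[x0 xL]; apply: (interior HD HL).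
    by rewrite /= /in_edge Hl x0.
  + have vt : valid (PE e t) by rewrite /= /in_edge Hl tp.
    have [b [_ Hb]] := interior HD HL vt.
    by exists (-b).
have E1 : forall e L, len e = Some L -> c (tgt e) = c (src e) + (a e)%:~R * L.
  move=> e L Hl; have L0 := len_pos Hl.
  rewrite -edge_aff ?ltW // => [|L' ]; last by rewrite Hl => -[->].
  by rewrite /edge_fun (negbTE (len_ne0 Hl)) Hl eqxx.
have E2 : forall e, len e = None -> a e = 0 /\ c (tgt e) = c (src e).
  move=> e Hl; have [_ F2 _] := HSG (tgt e).
  have := F2 e erefl; rewrite /end_slope Hl => -[_ [M HM]].
  pose t1 := Num.max M 0 + 1.
  have m1 : M <= Num.max M 0 by rewrite le_max lexx.
  have m2 : 0 <= Num.max M 0 by rewrite le_max lexx orbT.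
  have t1M : M < t1 by rewrite /t1; lra.
  have t10 : 0 <= t1 by rewrite /t1; lra.
  suff [-> ->] : a e = 0 /\ c (src e) = c (tgt e) by [].
  apply: (@slope_eq _ (a e) 0 t1 (t1 + 1)).
  - by apply/negP => /eqP H; have := addKr t1 1; rewrite -H addNr => /eqP; rewrite eq_sym oner_eq0.
  - by rewrite -edge_aff // ?HM // ?Hl // mul0r addr0.
  - rewrite -edge_aff ?HM ?Hl //; try lra.
    by rewrite mul0r addr0.
have E4 : forall e, (SG (tgt e) e).2 = - a e.
  move=> e; have [_ F2 _] := HSG (tgt e); have := F2 e erefl.
  rewrite /end_slope; case Hl : (len e) => [L|]; last first.
    by have [-> _] := E2 e Hl; move=> [-> _].
  move=> Hb; apply: (bwd_uniq Hb).
  have L0 := len_pos Hl.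
  have leL : forall y : R, y <= L -> forall L', len e = Some L' -> y <= L'.
    by move=> y yL L'; rewrite Hl => -[<-].
  exists L => // x /andP[x0 xL].
  rewrite (edge_aff e (L - x)); [|lra| apply: leL; lra].
  rewrite (edge_aff e L); [|lra| by apply: leL].
  by rewrite intrN; ring.
have Vsum : forall v, \sum_e ((src e == v)%:R * a e + (tgt e == v)%:R * (- a e)) = 0.
  move=> v; have [_ _ S3] := HSG v; rewrite -[RHS]S3; apply: eq_bigr => e _.
  congr (_ + _).
    by case: eqP => [<-|_]; rewrite ?mul0r.
  by case: eqP => [<-|_]; rewrite ?mul0r ?E4.
have Maxp : forall v, (forall w, c w <= c v) ->
    forall e, src e = v \/ tgt e = v -> c (src e) = c (tgt e).
  move=> v Hv.
  have Tle : forall e, (src e == v)%:R * a e + (tgt e == v)%:R * (- a e) <= 0 :> int.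
    move=> e; case Hl : (len e) => [L|]; last by have [-> _] := E2 e Hl; rewrite oppr0 !mulr0 addr0.
    have L0 := len_pos Hl; have El := E1 e L Hl.
    case: (eqVneq (src e) v) => [Hs|Hs]; case: (eqVneq (tgt e) v) => [Ht|Ht] /=.
    - by rewrite !mul1r subrr.
    - rewrite mul1r mul0r addr0 leNgt; apply/negP => ap.
      have : 0 < (a e)%:~R * L by rewrite mulr_gt0 // ltr0z.
      have := Hv (tgt e); rewrite El Hs; lra.
    - rewrite mul0r mul1r add0r oppr_le0 leNgt; apply/negP => ap.
      have : (a e)%:~R * L < 0 by rewrite pmulr_llt0 // ltrz0.
      have := Hv (src e); rewrite -Ht El; lra.
    - by rewrite !mul0r addr0.
  have T0 : forall e, (src e == v)%:R * a e + (tgt e == v)%:R * (- a e) = 0 :> int.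
    move=> e; apply/eqP; rewrite -oppr_eq0; apply/eqP.
    apply: (@psumr_eq0P _ _ xpredT (fun e => - ((src e == v)%:R * a e + (tgt e == v)%:R * (- a e)))) => //.
      by move=> i _; rewrite oppr_ge0.
    by rewrite sumrN Vsum oppr0.
  move=> e He.
  have [E'|ne] := boolP (src e == tgt e); first by rewrite (eqP E').
  case Hl : (len e) => [L|]; last by have [_ ->] := E2 e Hl.
  rewrite (E1 e L Hl); suff -> : a e = 0 by rewrite mul0r addr0.
  have := T0 e; case: He => [Hs|Ht].
  - have e1 : (src e == v) = true by rewrite Hs eqxx.
    have e2 : (tgt e == v) = false by rewrite -Hs eq_sym (negbTE ne).
    by rewrite e1 e2 /= mul1r mul0r addr0.
  - have e1 : (src e == v) = false by rewrite -Ht (negbTE ne).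
    have e2 : (tgt e == v) = true by rewrite Ht eqxx.
    by rewrite e1 e2 /= mul1r mul0r add0r => /eqP; rewrite oppr_eq0 => /eqP.
have [v0 _] : exists v0 : V G, True by case: p0 => [v|e t]; [exists v | exists (src e)].
have [vm _ Hvm] := @arg_maxP _ R (V G) v0 xpredT c isT.
pose S := [set w | c w == c vm].
have HS : S = finset.setT.
  apply: (connected (S := S)); first by exists vm; rewrite inE.
  move=> e; rewrite !inE.
  apply/idP/idP => /eqP H; apply/eqP.
  - have Hm : forall w, c w <= c (src e) by move=> w; rewrite H; exact: Hvm.
    by rewrite -H (Maxp _ Hm e (or_introl erefl)).
  - have Hm : forall w, c w <= c (tgt e) by move=> w; rewrite H; exact: Hvm.
    by rewrite -H (Maxp _ Hm e (or_intror erefl)).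
have Hc : forall w, c w = c vm.
  move=> w; have : w \in S by rewrite HS in_setT.
  by rewrite inE => /eqP.
have Ha : forall e, a e = 0.
  move=> e; case Hl : (len e) => [L|]; last by have [-> _] := E2 e Hl.
  have := E1 e L Hl; rewrite !Hc => H.
  have /eqP : (a e)%:~R * L = 0 :> R by lra.
  rewrite mulf_eq0 (negbTE (len_ne0 Hl)) orbF intr_eq0 => /eqP.
  done.
exists (c vm); case=> [v|e t] /=; first by move=> _; exact: Hc.
rewrite /in_edge => /andP[t0 tL].
have -> : gg s f (PE e t) = edge_fun (gg s f) e t.
  rewrite /edge_fun (gt_eqF t0); case Hl : (len e) tL => [L|] // tL.
  by rewrite (lt_eqF tL).
rewrite edge_aff ?Ha ?mul0r ?addr0 ?Hc ?ltW //.
by move=> L Hl; move: tL; rewrite Hl => /ltW.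
Qed.

Lemma g_zero (p : rpoint G) : valid p -> f (rs_map s p) = f p.
Proof.
move=> vp; have [cm Hcm] := g_const p.
have h1 := Hcm p vp.
have h2 := Hcm _ (rs_valid s vp).
move: h2 h1; rewrite /gg /Fi rs_inv => h2 h1.
have : f (rs_map s p) - f p = 0 by lra.
by move/eqP; rewrite subr_eq0 => /eqP.
Qed.
End S5.

Theorem lemma2 (R : realType) (G : tcurve R) (s : real_str G)
  (D1 D2 : rpoint G -> int) (f : rpoint G -> R) :
  divisor D1 -> divisor D2 -> real_div s D1 -> real_div s D2 ->
  rational_fun f -> laplacian_eq f (fun p => D2 p - D1 p) ->
  forall p, valid p -> f (rs_map s p) = f p.
Proof.
move=> _ _ H1 H2 _ HL p vp.
have HD : real_div s (fun p => D2 p - D1 p).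
  by move=> q vq; rewrite H1 // H2.
exact: (g_zero HD HL vp).
Qed.
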